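(* Let $k\ge3$ and $0\le n<k-2$ be integers, let $\chi_1,\chi_2$ be primitive non-trivial Dirichlet characters with conductors $q_1,q_2$, and let $\gamma=\begin{pmatrix}a&b\\c&d\end{pmatrix}\in\Gamma_0(q_1q_2)$ with $c>0$. Then for all $u>0$, $$\Big|\sum_{A\ge1}\frac{\chi_1(A)}{A^{n+1}}\sum_{B\ge1}\overline{\chi_2}(B)B^{k-n-2}e^{2\pi AB(ia/c-u)}\Big|\ll_{k,n,c,q_2}\frac{1}{\sqrt u}.$$ *)

(* Defs.v *)
From Stdlib Require Import Reals ZArith Znumtheory.
From Coquelicot Require Import Coquelicot.
Open Scope R_scope.

Definition Cexp (z : C) : C :=
  (exp (Re z) * cos (Im z), exp (Re z) * sin (Im z)).

Definition dirichlet_char (q : Z) (chi : Z -> C) : Prop :=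
  (0 < q)%Z /\
  chi 1%Z = RtoC 1 /\
  (forall m n : Z, chi (m * n)%Z = Cmult (chi m) (chi n)) /\
  (forall n : Z, chi (n + q)%Z = chi n) /\
  (forall n : Z, chi n = RtoC 0 <-> Z.gcd n q <> 1%Z).

Definition induced_modulus (q : Z) (chi : Z -> C) (d : Z) : Prop :=
  forall n : Z, Z.gcd n q = 1%Z -> Z.modulo (n - 1) d = 0%Z -> chi n = RtoC 1.

Definition primitive_char (q : Z) (chi : Z -> C) : Prop :=
  dirichlet_char q chi /\
  (forall d : Z, (0 < d)%Z -> (d | q)%Z -> induced_modulus q chi d -> d = q).

Definition nontrivial_char (chi : Z -> C) : Prop :=
  exists n : Z, chi n <> RtoC 0 /\ chi n <> RtoC 1.

Definition in_Gamma0 (N a b c d : Z) : Prop :=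
  (a * d - b * c)%Z = 1%Z /\ (N | c)%Z.

Definition term (k n : nat) (chi1 chi2 : Z -> C) (a c : Z) (u : R) (A B : nat) : C :=
  Cmult (Cdiv (chi1 (Z.of_nat A)) (RtoC (INR A ^ (n + 1))))
   (Cmult (Cmult (Cconj (chi2 (Z.of_nat B))) (RtoC (INR B ^ (k - n - 2))))
     (Cexp (Cmult (RtoC (2 * PI * INR A * INR B))
                  ((- u)%R, (IZR a / IZR c)%R)))).

(* Main.v *)
Require Import Defs.
From Stdlib Require Import Reals ZArith Znumtheory Lia Lra Psatz.
From Coquelicot Require Import Coquelicot.
Open Scope R_scope.

Fixpoint psum (g : nat -> R) (n : nat) : R :=
  match n with O => 0 | S n' => psum g n' + g n' end.

Lemma psum_ext g h n : (forall i, (i < n)%nat -> g i = h i) -> psum g n = psum h n.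
Proof. induction n; simpl; intros H; auto. rewrite IHn; [rewrite H|]; auto. Qed.

Lemma psum_plus g h n : psum (fun i => g i + h i) n = psum g n + psum h n.
Proof. induction n; simpl; [lra|]. rewrite IHn; lra. Qed.

Lemma psum_scal k g n : psum (fun i => k * g i) n = k * psum g n.
Proof. induction n; simpl; [lra|]. rewrite IHn; lra. Qed.

Lemma psum_front g n : psum g (S n) = g O + psum (fun i => g (S i)) n.
Proof. induction n; simpl in *; [lra|]. rewrite IHn; lra. Qed.

Lemma psum_add g a b : psum g (a + b) = psum g a + psum (fun i => g (a + i)%nat) b.
Proof. induction b; simpl. rewrite Nat.add_0_r; lra. rewrite Nat.add_succ_r; simpl. rewrite IHb; lra. Qed.

Lemma psum_abs g n : Rabs (psum g n) <= psum (fun i => Rabs (g i)) n.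
Proof. induction n; simpl. rewrite Rabs_R0; lra. eapply Rle_trans. apply Rabs_triang. lra. Qed.

Lemma psum_le g h n : (forall i, (i<n)%nat -> g i <= h i) -> psum g n <= psum h n.
Proof. induction n; simpl; intros H; [lra|]. apply Rplus_le_compat; auto. Qed.

Lemma psum_sum_f g n : psum g (S n) = sum_f_R0 g n.
Proof. induction n; simpl in *; [lra|]. rewrite <- IHn; simpl; lra. Qed.

Lemma psum_const k n : psum (fun _ => k) n = INR n * k.
Proof. induction n; simpl psum; [simpl; lra|]. rewrite IHn, S_INR; lra. Qed.

Lemma window (h : nat -> R) c : (forall B, h (B + c)%nat = h B) ->
  forall a, psum (fun s => h (a + s)%nat) c = psum h c.
Proof.
  intros Hp a; induction a.
  - apply psum_ext; intros; f_equal.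
  - rewrite <- IHa.
    assert (E := psum_front (fun s => h (a + s)%nat) c).
    simpl psum in E.
    rewrite Hp, Nat.add_0_r in E.
    assert (psum (fun s => h (S a + s)%nat) c = psum (fun i => h (a + S i)%nat) c).
    { apply psum_ext; intros; f_equal; lia. }
    lra.
Qed.

Definition wt (m : nat) (x : R) (j : nat) : R := INR (S j) ^ m * x ^ (S j).

Lemma wt_ge0 m x j : 0 <= x -> 0 <= wt m x j.
Proof. intros; unfold wt; apply Rmult_le_pos; apply pow_le; auto; apply pos_INR. Qed.

Lemma pow_diff_le y m : 0 <= y -> (y+1)^(S m) - y^(S m) <= INR (S m) * (y+1)^m.
Proof.
  intros Hy; induction m.
  - simpl; lra.
  - assert (y ^ S m <= (y+1) ^ S m) by (apply pow_incr; lra).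
    replace ((y + 1) ^ S (S m) - y ^ S (S m)) with ((y+1) * ((y+1)^(S m) - y^(S m)) + y ^ S m)
      by (simpl; ring).
    rewrite S_INR.
    replace ((INR (S m) + 1) * (y + 1) ^ S m) with ((y+1) * (INR (S m) * (y+1)^m) + (y+1)^S m) by (simpl; ring).
    apply Rplus_le_compat; auto. apply Rmult_le_compat_l; lra.
Qed.

Definition sn (a : nat -> R) (N : nat) : R := sum_n a N.
Lemma sn_O a : sn a 0 = a O. Proof. unfold sn. rewrite sum_O. reflexivity. Qed.
Lemma sn_S a N : sn a (S N) = sn a N + a (S N). Proof. unfold sn. rewrite sum_Sn. reflexivity. Qed.

Lemma wt_identity m x N :
  (1 - x) * sn (wt m x) N =
  sn (fun j => (INR (S j) ^ m - INR j ^ m) * x ^ S j) N - INR (S N) ^ m * x ^ (S (S N)) + INR 0 ^ m * x.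
Proof.
  induction N.
  - rewrite !sn_O; unfold wt; simpl; ring.
  - rewrite !sn_S.
    rewrite Rmult_plus_distr_l, IHN. unfold wt. simpl; ring.
Qed.

Lemma wt_partial m x N : 0 <= x < 1 ->
  sn (wt m x) N <= INR (fact m) * x / (1 - x) ^ (S m).
Proof.
  intros Hx. revert N; induction m; intros N.
  - assert (H := wt_identity 0 x N).
    assert (H2 : sn (fun j => (INR (S j) ^ 0 - INR j ^ 0) * x ^ S j) N = 0).
    { clear. induction N. rewrite sn_O; simpl; ring. rewrite sn_S, IHN; simpl; ring. }
    rewrite H2 in H. simpl in H |- *.
    assert (0 <= x ^ S (S N)) by (apply pow_le; lra).
    apply (Rmult_le_reg_l (1 - x)); [lra|].
    replace ((1 - x) * (1 * x / ((1 - x) * 1))) with x by (field; intro; lra). simpl in H.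
    assert (0 <= x * (x * x ^ N)) by (apply Rmult_le_pos; [lra| apply Rmult_le_pos; [lra| apply pow_le; lra]]). lra.
  - assert (H := wt_identity (S m) x N).
    assert (H2 : sn (fun j => (INR (S j) ^ S m - INR j ^ S m) * x ^ S j) N <= INR (S m) * sn (wt m x) N).
    { clear -Hx. induction N.
      - rewrite !sn_O. unfold wt. replace (INR 1) with (INR 0 + 1) by (simpl; ring).
        assert (H := pow_diff_le (INR 0) m (pos_INR 0)).
        assert (0 <= x ^ 1) by (apply pow_le; lra).
        rewrite <- Rmult_assoc. apply Rmult_le_compat_r; auto.
      - rewrite !sn_S.
        rewrite Rmult_plus_distr_l. apply Rplus_le_compat; auto.
        unfold wt. replace (INR (S (S N))) with (INR (S N) + 1) by (rewrite (S_INR (S N)); ring).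
        assert (H := pow_diff_le (INR (S N)) m (pos_INR _)).
        assert (0 <= x ^ S (S N)) by (apply pow_le; lra).
        rewrite <- Rmult_assoc. apply Rmult_le_compat_r; auto. }
    assert (H3 := IHm N).
    assert (0 <= INR (S N) ^ S m * x ^ S (S N)) by (apply Rmult_le_pos; apply pow_le; [apply pos_INR|lra]).
    simpl (INR 0 ^ S m) in H. rewrite Rmult_0_l, Rmult_0_l, Rplus_0_r in H.
    assert (Hp : 0 < (1 - x) ^ S m) by (apply pow_lt; lra).
    assert ((1 - x) * sn (wt (S m) x) N <= INR (S m) * (INR (fact m) * x / (1 - x) ^ S m)).
    { assert (0 <= INR (S m)) by apply pos_INR. nra. }
    apply (Rmult_le_reg_l (1 - x)); [lra|].
    eapply Rle_trans; [apply H1|].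
    rewrite fact_simpl, mult_INR. right. replace ((1-x) ^ S (S m)) with ((1-x) * (1-x) ^ S m) by (simpl; ring).
    field. split; intro; lra.
Qed.

Lemma sum_n_incr a N : (forall n, 0 <= a n) -> sn a N <= sn a (S N).
Proof. intros H. rewrite sn_S. specialize (H (S N)). lra. Qed.

Lemma wt_series m x : 0 <= x < 1 ->
  ex_series (wt m x) /\ Series (wt m x) <= INR (fact m) * x / (1 - x) ^ (S m).
Proof.
  intros Hx.
  assert (Hex : ex_series (wt m x)).
  { destruct (ex_finite_lim_seq_incr (sn (wt m x)) (INR (fact m) * x / (1 - x) ^ (S m))) as [l Hl].
    - intros; apply sum_n_incr; intros; apply wt_ge0; lra.
    - intros; apply wt_partial; auto.
    - exists l. exact Hl. }
  split; auto.
  assert (Hs := Series_correct _ Hex).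
  assert (H := is_lim_seq_le (sn (wt m x)) (fun _ => INR (fact m) * x / (1 - x) ^ (S m))
            (Series (wt m x)) (INR (fact m) * x / (1 - x) ^ (S m))).
  simpl in H. apply H.
  - intros; apply wt_partial; auto.
  - exact Hs.
  - apply is_lim_seq_const.
Qed.

Definition Sm (f : nat -> R) (m : nat) (x : R) : R := Series (fun j => f (S j) * wt m x j).

Lemma Sm_ex f M m x : 0 <= x < 1 -> (forall B, Rabs (f B) <= M) ->
  ex_series (fun j => Rabs (f (S j) * wt m x j)) /\ ex_series (fun j => f (S j) * wt m x j).
Proof.
  intros Hx HM. destruct (wt_series m x Hx) as [Hex _].
  assert (Hb : ex_series (fun j => M * wt m x j)).
  { destruct Hex as [l Hl]. exists (M * l). exact (is_series_scal_l M _ l Hl). }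
  assert (H1 : ex_series (fun j => Rabs (f (S j) * wt m x j))).
  { apply (@ex_series_le R_AbsRing R_CompleteNormedModule _ (fun j => M * wt m x j)); auto.
    intros j. change (norm (Rabs (f (S j) * wt m x j))) with (Rabs (Rabs (f (S j) * wt m x j))).
    rewrite Rabs_Rabsolu, Rabs_mult, (Rabs_right (wt m x j)); [|apply Rle_ge, wt_ge0; lra].
    apply Rmult_le_compat_r; auto. apply wt_ge0; lra. }
  split; auto. apply ex_series_Rabs; auto.
Qed.

Lemma Sm_trivial f M m x : 0 <= x < 1 -> (forall B, Rabs (f B) <= M) ->
  Rabs (Sm f m x) <= M * (INR (fact m) * x / (1 - x) ^ (S m)).
Proof.
  intros Hx HM. destruct (Sm_ex f M m x Hx HM) as [H1 H2].
  destruct (wt_series m x Hx) as [Hex Hb].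
  assert (M0 : 0 <= M) by (specialize (HM O); pose proof (Rabs_pos (f O)); lra).
  unfold Sm. eapply Rle_trans. apply Series_Rabs; auto.
  eapply Rle_trans. apply (Series_le _ (fun j => M * wt m x j)).
  - intros j. split. apply Rabs_pos. rewrite Rabs_mult, (Rabs_right (wt m x j)); [|apply Rle_ge, wt_ge0; lra].
    apply Rmult_le_compat_r; auto. apply wt_ge0; lra.
  - destruct Hex as [l Hl]. exists (M * l). exact (is_series_scal_l M _ l Hl).
  - rewrite Series_scal_l. apply Rmult_le_compat_l; auto.
Qed.

Lemma is_series_psum (g : nat -> nat -> R) (s : nat -> R) L :
  (forall l, (l < L)%nat -> is_series (g l) (s l)) ->
  is_series (fun j => psum (fun l => g l j) L) (psum s L).
Proof.
  induction L; intros H; simpl.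
  - unfold is_series. apply filterlim_ext with (fun _ => 0).
    intros n. induction n. rewrite sum_O; reflexivity. rewrite sum_Sn, <- IHn. unfold plus; simpl. ring.
    apply filterlim_const.
  - exact (is_series_plus _ _ _ _ (IHL (fun l Hl => H l ltac:(lia))) (H L ltac:(lia))).
Qed.

Lemma Sm_identity f F m x M : 0 <= x < 1 -> (forall B, Rabs (F B) <= M) ->
  (forall B, f (S B) = F (S B) - F B) ->
  Sm f m x = (1 - x) * Sm F m x - x * F O - x * psum (fun l => Binomial.C m l * Sm F l x) m.
Proof.
  intros Hx HM Hf.
  assert (exF : forall l, is_series (fun j => F (S j) * wt l x j) (Sm F l x)).
  { intros l. apply Series_correct. apply (Sm_ex F M l x Hx HM). }
  set (X := psum (fun l => Binomial.C m l * Sm F l x) (S m)).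
  assert (Hpt : forall j, x * psum (fun l => Binomial.C m l * (F (S j) * wt l x j)) (S m) = F (S j) * wt m x (S j)).
  { intros j. unfold wt.
    replace (INR (S (S j))) with (INR (S j) + 1) by (rewrite (S_INR (S j)); ring).
    rewrite binomial, <- psum_sum_f.
    transitivity ((F (S j) * x ^ S (S j)) * psum (fun i => Binomial.C m i * INR (S j) ^ i * 1 ^ (m - i)) (S m)); [|ring].
    rewrite <- !psum_scal. apply psum_ext; intros i _. rewrite pow1. simpl. ring. }
  assert (Hv1 : is_series (fun j => F (S j) * wt m x (S j)) (x * X)).
  { apply (is_series_ext _ _ _ Hpt).
    assert (H : is_series (fun j => psum (fun l => Binomial.C m l * (F (S j) * wt l x j)) (S m)) X).
    { apply (is_series_psum (fun l j => Binomial.C m l * (F (S j) * wt l x j))). intros l _.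
      exact (is_series_scal_l (Binomial.C m l) _ _ (exF l)). }
    exact (is_series_scal_l x _ _ H). }
  assert (Hv : is_series (fun j => F j * wt m x j) (x * X + F O * x)).
  { apply is_series_decr_1.
    match goal with |- is_series _ ?l => replace l with (x * X) end. exact Hv1.
    unfold wt. rewrite pow1. change (x * X = (x * X + F 0%nat * x) + - (F 0%nat * (1 * x ^ 1))). simpl. ring. }
  assert (Hall : is_series (fun j => f (S j) * wt m x j) (Sm F m x - (x * X + F O * x))).
  { assert (Hp2 : forall j, F (S j) * wt m x j - F j * wt m x j = f (S j) * wt m x j).
    { intros j. rewrite Hf. ring. }
    apply (is_series_ext _ _ _ Hp2).
    exact (is_series_minus _ _ _ _ (exF m) Hv). }
  unfold Sm at 1. rewrite (is_series_unique _ _ Hall).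
  unfold X. simpl psum. rewrite C_n_n. ring.
Qed.

Lemma Rabs_minus_le a b : Rabs (a - b) <= Rabs a + Rabs b.
Proof. unfold Rminus. rewrite <- (Rabs_Ropp b). apply Rabs_triang. Qed.

Definition good (c : nat) (f : nat -> R) (M : R) :=
  (forall B, f (B + c)%nat = f B) /\ psum f c = 0 /\ (forall B, Rabs (f B) <= M).

Lemma antider c f M : (0 < c)%nat -> good c f M ->
  exists F, good c F (2 * INR c * M) /\ (forall B, f (S B) = F (S B) - F B).
Proof.
  intros Hc [Hp [H0 HM]].
  assert (M0 : 0 <= M) by (specialize (HM O); pose proof (Rabs_pos (f O)); lra).
  assert (c0 : 0 < INR c) by (apply lt_0_INR; lia).
  set (G := fun B => psum (fun s => f (S s)) B).
  assert (GP : forall B, G (B + c)%nat = G B).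
  { intros B. unfold G. rewrite psum_add.
    assert (E := window f c Hp (S B)). simpl in E. rewrite H0 in E. rewrite E. ring. }
  assert (GB : forall B, Rabs (G B) <= INR c * M).
  { intros B. induction B as [B IH] using (well_founded_induction Wf_nat.lt_wf).
    destruct (lt_dec B c).
    - unfold G. eapply Rle_trans; [apply psum_abs|]. eapply Rle_trans.
      apply (psum_le _ (fun _ => M)). intros; apply HM. rewrite psum_const.
      apply Rmult_le_compat_r; auto. apply le_INR; lia.
    - replace B with ((B - c) + c)%nat by lia. rewrite GP. apply IH. lia. }
  set (mu := psum G c / INR c).
  assert (Hmu : Rabs mu <= INR c * M).
  { assert (E : psum G c = mu * INR c) by (unfold mu; field; lra).
    assert (H1 : Rabs (psum G c) <= INR c * (INR c * M)).
    { eapply Rle_trans; [apply psum_abs|]. eapply Rle_trans.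
      apply (psum_le _ (fun _ => INR c * M)). intros; apply GB. rewrite psum_const. lra. }
    rewrite E, Rabs_mult, (Rabs_right (INR c)) in H1 by lra.
    nra. }
  exists (fun B => G B - mu). split; [split; [|split]|].
  - intros B; simpl; rewrite GP; auto.
  - transitivity (psum G c + psum (fun _ => - mu) c).
    + rewrite <- psum_plus. apply psum_ext; intros; ring.
    + rewrite psum_const. unfold mu. field. lra.
  - intros B. eapply Rle_trans. apply Rabs_minus_le. specialize (GB B). lra.
  - intros B. unfold G. simpl. ring.
Qed.

Lemma good_M0 c f M : good c f M -> 0 <= M.
Proof. intros [_ [_ HM]]. specialize (HM O); pose proof (Rabs_pos (f O)); lra. Qed.

Lemma binC_ge0 m l : 0 <= Binomial.C m l.
Proof.
  unfold Binomial.C. apply Rmult_le_pos. apply pos_INR.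
  apply Rlt_le, Rinv_0_lt_compat, Rmult_lt_0_compat; apply INR_fact_lt_0.
Qed.

Lemma pow_le1 y p : 0 <= y <= 1 -> 0 <= y ^ p <= 1.
Proof.
  intros H; induction p; simpl; [lra|]. split. apply Rmult_le_pos; lra.
  replace 1 with (1 * 1) by ring. apply Rmult_le_compat; lra.
Qed.

Lemma step_m c m : (0 < c)%nat ->
  (exists K, 0 <= K /\ forall l, (l < m)%nat -> forall f M x, 0 <= x < 1 -> good c f M ->
      Rabs (Sm f l x) <= K * M * x) ->
  exists K', 0 <= K' /\ forall f M x, 0 <= x < 1 -> good c f M -> Rabs (Sm f m x) <= K' * M * x.
Proof.
  intros Hc [K [K0 HK]].
  assert (c0 : 0 < INR c) by (apply lt_0_INR; lia).
  set (Cs := psum (fun l => Binomial.C m l) m).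
  assert (Cs0 : 0 <= Cs).
  { unfold Cs. rewrite <- (Rmult_0_r (INR m)), <- psum_const. apply psum_le. intros; apply binC_ge0. }
  assert (Rd : forall d, exists E, 0 <= E /\ forall f M x, 0 <= x < 1 -> good c f M ->
            (1 - x) ^ (S m - d) * Rabs (Sm f m x) <= E * M * x).
  { induction d.
    - exists (INR (fact m)). split. apply pos_INR. intros f M x Hx Hg. rewrite Nat.sub_0_r.
      assert (M0 := good_M0 _ _ _ Hg).
      destruct Hg as [_ [_ HM]].
      assert (H := Sm_trivial f M m x Hx HM).
      assert (Hp : 0 < (1 - x) ^ S m) by (apply pow_lt; lra).
      apply Rmult_le_compat_l with (r := (1 - x) ^ S m) in H; [|lra].
      eapply Rle_trans; [apply H|]. right. field. lra.
    - destruct IHd as [E [E0 HE]].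
      destruct (Nat.eq_dec (S m - d) 0) as [Hz|Hz].
      + exists E. split; auto. intros f M x Hx Hg. specialize (HE f M x Hx Hg).
        rewrite Hz in HE. replace (S m - S d)%nat with 0%nat by lia. exact HE.
      + exists ((E + 1 + Cs * K) * (2 * INR c)). split.
        { apply Rmult_le_pos; [|lra]. assert (0 <= Cs * K) by (apply Rmult_le_pos; auto). lra. }
        intros f M x Hx Hg.
        assert (M0 := good_M0 _ _ _ Hg).
        set (p := (S m - S d)%nat). assert (Hsp : (S m - d)%nat = S p) by (unfold p; lia).
        destruct (antider c f M Hc Hg) as [F [HgF HfF]].
        set (M' := 2 * INR c * M) in *.
        assert (HgF' := HgF). destruct HgF' as [_ [_ HMF]].
        rewrite (Sm_identity f F m x M' Hx HMF HfF).
        assert (A1 := HE F M' x Hx HgF). rewrite Hsp in A1.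
        assert (A2 := HMF O).
        assert (A3 : Rabs (psum (fun l => Binomial.C m l * Sm F l x) m) <= Cs * (K * M' * x)).
        { eapply Rle_trans; [apply psum_abs|].
          eapply Rle_trans. apply (psum_le _ (fun l => (K * M' * x) * Binomial.C m l)).
          - intros l Hl. rewrite Rabs_mult, (Rabs_right (Binomial.C m l)) by (apply Rle_ge, binC_ge0).
            rewrite (Rmult_comm (K * M' * x)). apply Rmult_le_compat_l. apply binC_ge0. apply HK; auto.
          - rewrite psum_scal. unfold Cs. rewrite Rmult_comm; apply Rle_refl. }
        assert (P := pow_le1 (1 - x) p ltac:(lra)).
        assert (Sp : (1 - x) ^ S p = (1 - x) * (1 - x) ^ p) by reflexivity.
        set (a := Sm F m x) in *. set (b := psum (fun l => Binomial.C m l * Sm F l x) m) in *.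
        set (q := (1 - x) ^ p) in *.
        assert (T : Rabs ((1 - x) * a - x * F O - x * b) <= (1 - x) * Rabs a + x * Rabs (F O) + x * Rabs b).
        { eapply Rle_trans. apply Rabs_minus_le. eapply Rle_trans. apply Rplus_le_compat_r. apply Rabs_minus_le.
          rewrite !Rabs_mult, (Rabs_right (1 - x)), (Rabs_right x) by lra. lra. }
        assert (M'0 : 0 <= M') by (unfold M'; nra).
        assert (B1 : q * ((1 - x) * Rabs a) <= E * M' * x) by (rewrite Sp in A1; nra).
        assert (B2 : q * (x * Rabs (F O)) <= x * M').
        { assert (0 <= Rabs (F O)) by apply Rabs_pos.
          assert (x * Rabs (F O) <= x * M') by (apply Rmult_le_compat_l; lra).
          assert (0 <= x * Rabs (F O)) by (apply Rmult_le_pos; lra).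
          assert (q * (x * Rabs (F O)) <= 1 * (x * Rabs (F O))) by (apply Rmult_le_compat_r; lra).
          lra. }
        assert (B3 : q * (x * Rabs b) <= Cs * K * M' * x).
        { assert (0 <= Rabs b) by apply Rabs_pos.
          assert (0 <= Cs * K * M') by (apply Rmult_le_pos; [apply Rmult_le_pos|]; auto).
          assert (0 <= x * Rabs b) by (apply Rmult_le_pos; lra).
          assert (q * (x * Rabs b) <= 1 * (x * Rabs b)) by (apply Rmult_le_compat_r; lra).
          assert (x * Rabs b <= x * (Cs * (K * M' * x))) by (apply Rmult_le_compat_l; lra).
          assert (0 <= Cs * K * M' * x) by (apply Rmult_le_pos; lra).
          assert (x * (Cs * (K * M' * x)) = (Cs * K * M' * x) * x) by ring.
          assert ((Cs * K * M' * x) * x <= (Cs * K * M' * x) * 1) by (apply Rmult_le_compat_l; lra).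
          lra. }
        assert (q * Rabs ((1 - x) * a - x * F O - x * b) <= q * ((1 - x) * Rabs a + x * Rabs (F O) + x * Rabs b))
          by (apply Rmult_le_compat_l; lra).
        assert (E1 : q * ((1 - x) * Rabs a + x * Rabs (F O) + x * Rabs b) =
                q * ((1 - x) * Rabs a) + q * (x * Rabs (F O)) + q * (x * Rabs b)) by ring.
        assert (E2 : (E + 1 + Cs * K) * (2 * INR c) * M * x = E * M' * x + x * M' + Cs * K * M' * x)
          by (unfold M'; ring).
        rewrite E2. lra. }
  destruct (Rd (S m)) as [E [E0 HE]]. exists E. split; auto.
  intros f M x Hx Hg. specialize (HE f M x Hx Hg). rewrite Nat.sub_diag in HE. simpl in HE. lra.
Qed.

Lemma core c m : (0 < c)%nat -> exists K, 0 <= K /\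
  forall l, (l <= m)%nat -> forall f M x, 0 <= x < 1 -> good c f M -> Rabs (Sm f l x) <= K * M * x.
Proof.
  intros Hc. induction m.
  - destruct (step_m c 0 Hc) as [K [K0 HK]].
    + exists 0. split; [lra|]. intros; lia.
    + exists K. split; auto. intros l Hl. replace l with 0%nat by lia. auto.
  - destruct IHm as [K [K0 HK]].
    destruct (step_m c (S m) Hc) as [K' [K0' HK']].
    + exists K. split; auto. intros l Hl. apply HK. lia.
    + exists (Rmax K K'). split. eapply Rle_trans; [apply K0|apply Rmax_l].
      intros l Hl f M x Hx Hg.
      assert (M0 := good_M0 _ _ _ Hg).
      assert (0 <= M * x) by (apply Rmult_le_pos; lra).
      destruct (Nat.eq_dec l (S m)) as [->|Hne].
      * apply Rle_trans with (K' * M * x). apply HK'; auto.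
        rewrite !Rmult_assoc. apply Rmult_le_compat_r; auto. apply Rmax_r.
      * apply Rle_trans with (K * M * x). apply HK; auto; lia.
        rewrite !Rmult_assoc. apply Rmult_le_compat_r; auto. apply Rmax_l.
Qed.

Lemma chi_per_nat q chi : dirichlet_char q chi ->
  forall (j : nat) n, chi (n + Z.of_nat j * q)%Z = chi n.
Proof.
  intros [_ [_ [_ [Hp _]]]] j. induction j; intros n.
  - f_equal; lia.
  - replace (n + Z.of_nat (S j) * q)%Z with ((n + Z.of_nat j * q) + q)%Z by lia.
    rewrite Hp. apply IHj.
Qed.

Lemma chi_per q chi : dirichlet_char q chi ->
  forall (j : Z) n, chi (n + j * q)%Z = chi n.
Proof.
  intros Hd j n. destruct (Z_le_gt_dec 0 j).
  - replace j with (Z.of_nat (Z.to_nat j)) by lia. apply chi_per_nat; auto.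
  - rewrite <- (chi_per_nat q chi Hd (Z.to_nat (- j)) (n + j * q)%Z).
    f_equal. lia.
Qed.

Lemma chi_mod q chi : dirichlet_char q chi -> forall n, chi n = chi (n mod q)%Z.
Proof.
  intros Hd n. assert (q0 : (0 < q)%Z) by apply Hd.
  rewrite <- (chi_per q chi Hd (n / q) (n mod q)%Z). f_equal.
  rewrite (Z_div_mod_eq_full n q) at 1. lia.
Qed.

Lemma psum_single (g : nat -> R) N i : (forall j, 0 <= g j) -> (i < N)%nat -> g i <= psum g N.
Proof.
  intros H0. induction N; intros Hi; [lia|]. simpl.
  assert (0 <= psum g N).
  { clear -H0. induction N; simpl; [lra|]. specialize (H0 N). lra. }
  destruct (Nat.eq_dec i N) as [->|Hne]. specialize (H0 N); lra.
  assert (g i <= psum g N) by (apply IHN; lia). specialize (H0 N); lra.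
Qed.

Lemma chi_pow q chi : dirichlet_char q chi ->
  forall n (j : nat), Cmod (chi (n ^ Z.of_nat j)%Z) = Cmod (chi n) ^ j.
Proof.
  intros Hd n j. induction j.
  - simpl. destruct Hd as [_ [H1 _]]. rewrite H1. apply Cmod_1.
  - rewrite Nat2Z.inj_succ, Z.pow_succ_r by lia.
    destruct Hd as [_ [_ [Hm _]]]. rewrite Hm, Cmod_mult, IHj. simpl. ring.
Qed.

Lemma chi_bound q chi : dirichlet_char q chi -> forall n, Cmod (chi n) <= 1.
Proof.
  intros Hd n.
  assert (q0 : (0 < q)%Z) by apply Hd.
  set (Sb := psum (fun r => Cmod (chi (Z.of_nat r))) (Z.to_nat q)).
  assert (HB : forall m, Cmod (chi m) <= Sb).
  { intros m. rewrite (chi_mod q chi Hd m).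
    assert (Hr := Z.mod_pos_bound m q q0).
    replace (m mod q)%Z with (Z.of_nat (Z.to_nat (m mod q))) by lia.
    apply (psum_single (fun r => Cmod (chi (Z.of_nat r)))). intros; apply Cmod_ge_0. lia. }
  destruct (Rle_dec (Cmod (chi n)) 1) as [H|H]; auto. exfalso.
  assert (Hgt : Rabs (Cmod (chi n)) > 1) by (rewrite Rabs_right; [lra| apply Rle_ge, Cmod_ge_0]).
  destruct (Pow_x_infinity _ Hgt (Sb + 1)) as [N HN].
  specialize (HN N (le_n N)).
  rewrite Rabs_right in HN by (apply Rle_ge, pow_le, Cmod_ge_0).
  rewrite <- (chi_pow q chi Hd) in HN. specialize (HB (n ^ Z.of_nat N)%Z). lra.
Qed.

Lemma q_ne_1 q chi : dirichlet_char q chi -> nontrivial_char chi -> q <> 1%Z.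
Proof.
  intros Hd [n [H0 H1]] Hq. subst q. apply H1.
  assert (Hc1 : chi 1%Z = RtoC 1) by apply Hd.
  rewrite <- Hc1. rewrite <- (chi_per 1 chi Hd (n - 1) 1%Z). f_equal; lia.
Qed.

Lemma phase_ne1 q1 chi1 q2 a b cZ d (A : nat) :
  dirichlet_char q1 chi1 -> nontrivial_char chi1 -> (0 < q2)%Z ->
  in_Gamma0 (q1 * q2) a b cZ d -> (0 < cZ)%Z -> chi1 (Z.of_nat A) <> RtoC 0 ->
  cos (IZR q2 * (2 * PI * INR A * (IZR a / IZR cZ))) <> 1.
Proof.
  intros Hd Hnt Hq2 [Hdet [e He]] Hc Hchi Hcos.
  assert (Hq1 : q1 <> 1%Z) by (eapply q_ne_1; eauto).
  assert (q10 : (0 < q1)%Z) by apply Hd.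
  set (y := IZR q2 * (2 * PI * INR A * (IZR a / IZR cZ))) in *.
  assert (Hs : sin (y / 2) = 0).
  { assert (E : cos (2 * (y / 2)) = 1 - 2 * sin (y / 2) * sin (y / 2)) by apply cos_2a_sin.
    replace (2 * (y / 2)) with y in E by field. rewrite Hcos in E.
    assert (sin (y / 2) * sin (y / 2) = 0) by lra.
    destruct (Rmult_integral _ _ H); auto. }
  destruct (sin_eq_0_0 _ Hs) as [k Hk].
  assert (cR : IZR cZ <> 0) by (apply not_0_IZR; lia).
  assert (HZ : IZR (q2 * Z.of_nat A * a) = IZR (k * cZ)).
  { rewrite !mult_IZR. rewrite <- INR_IZR_INZ.
    unfold y in Hk. assert (PI <> 0) by (pose proof PI_RGT_0; lra).
    apply (Rmult_eq_reg_r (PI / IZR cZ)). 2: { apply Rmult_integral_contrapositive; split; auto. apply Rinv_neq_0_compat; auto. }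
    replace (IZR q2 * INR A * IZR a * (PI / IZR cZ)) with (IZR q2 * (2 * PI * INR A * (IZR a / IZR cZ)) / 2) by (field; auto).
    rewrite Hk. field; auto. }
  apply eq_IZR in HZ.
  assert (Hdiv : (q1 | Z.of_nat A * a)%Z).
  { apply (Z.mul_divide_cancel_r _ _ q2); [lia|].
    exists (k * e)%Z. rewrite He in HZ. lia. }
  assert (Hg : Z.gcd q1 a = 1%Z).
  { apply Z.bezout_1_gcd. exists (- b * e * q2)%Z, d. rewrite He in Hdet. lia. }
  assert (HA : (q1 | Z.of_nat A)%Z).
  { apply (Z.gauss _ a); auto. rewrite Z.mul_comm; auto. }
  assert (Hgcd : Z.gcd (Z.of_nat A) q1 = q1).
  { rewrite Z.gcd_comm. apply Z.divide_gcd_iff; auto; lia. }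
  apply Hchi. destruct Hd as [_ [_ [_ [_ Hz]]]]. apply Hz. rewrite Hgcd. auto.
Qed.

Lemma cos_periodZ x w : cos (x + 2 * IZR w * PI) = cos x.
Proof.
  destruct (Z_le_gt_dec 0 w).
  - replace (IZR w) with (INR (Z.to_nat w)) by (rewrite INR_IZR_INZ; f_equal; lia). apply cos_period.
  - rewrite <- (cos_period (x + 2 * IZR w * PI) (Z.to_nat (- w))). f_equal.
    rewrite INR_IZR_INZ, Z2Nat.id by lia. rewrite opp_IZR. ring.
Qed.

Lemma sin_periodZ x w : sin (x + 2 * IZR w * PI) = sin x.
Proof.
  destruct (Z_le_gt_dec 0 w).
  - replace (IZR w) with (INR (Z.to_nat w)) by (rewrite INR_IZR_INZ; f_equal; lia). apply sin_period.
  - rewrite <- (sin_period (x + 2 * IZR w * PI) (Z.to_nat (- w))). f_equal.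
    rewrite INR_IZR_INZ, Z2Nat.id by lia. rewrite opp_IZR. ring.
Qed.

Definition gph (chi2 : Z -> C) (th : R) (B : nat) : C :=
  Cmult (Cconj (chi2 (Z.of_nat B))) (cos (INR B * th), sin (INR B * th)).

Lemma gph_bound q2 chi2 th B : dirichlet_char q2 chi2 ->
  Rabs (Re (gph chi2 th B)) <= 1 /\ Rabs (Im (gph chi2 th B)) <= 1.
Proof.
  intros Hd. assert (H := chi_bound q2 chi2 Hd (Z.of_nat B)).
  unfold gph. destruct (chi2 (Z.of_nat B)) as [cr ci].
  unfold Cmod in H. cbn [fst snd] in H. simpl Re; simpl Im.
  assert (H2 : cr * cr + ci * ci <= 1).
  { assert (H0 : 0 <= cr ^ 2 + ci ^ 2) by nra.
    assert (E := sqrt_sqrt _ H0).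
    assert (0 <= sqrt (cr ^ 2 + ci ^ 2)) by apply sqrt_pos.
    assert (sqrt (cr ^ 2 + ci ^ 2) * sqrt (cr ^ 2 + ci ^ 2) <= 1 * 1) by (apply Rmult_le_compat; lra).
    replace (cr * cr + ci * ci) with (cr ^ 2 + ci ^ 2) by ring. lra. }
  assert (Hcs := sin2_cos2 (INR B * th)). unfold Rsqr in Hcs.
  set (co := cos (INR B * th)) in *. set (si := sin (INR B * th)) in *.
  assert (L1 : (cr * co + ci * si) * (cr * co + ci * si) <= 1).
  { assert (P : 0 <= (cr * si - ci * co) * (cr * si - ci * co)) by apply Rle_0_sqr.
    assert (Eq : (cr * co + ci * si) * (cr * co + ci * si) + (cr * si - ci * co) * (cr * si - ci * co)
            = (cr * cr + ci * ci) * (si * si + co * co)) by ring.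
    rewrite Hcs in Eq. nra. }
  assert (L2 : (cr * si + - ci * co) * (cr * si + - ci * co) <= 1).
  { assert (P : 0 <= (cr * co + ci * si) * (cr * co + ci * si)) by apply Rle_0_sqr.
    assert (Eq : (cr * si + - ci * co) * (cr * si + - ci * co) + (cr * co + ci * si) * (cr * co + ci * si)
            = (cr * cr + ci * ci) * (si * si + co * co)) by ring.
    rewrite Hcs in Eq. nra. }
  assert (Sq : forall v, v * v <= 1 -> Rabs v <= 1).
  { intros v Hv. apply Rabs_le. split; nra. }
  split; apply Sq.
  - replace (cr * co - - ci * si) with (cr * co + ci * si) by ring. auto.
  - replace (cr * si + - ci * co) with (cr * si + - ci * co) by ring. auto.
Qed.

Lemma gph_per q2 chi2 th (cn : nat) (w : Z) : dirichlet_char q2 chi2 ->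
  (q2 | Z.of_nat cn)%Z -> INR cn * th = 2 * IZR w * PI ->
  forall B, gph chi2 th (B + cn) = gph chi2 th B.
Proof.
  intros Hd [t Ht] Hw B. unfold gph.
  rewrite Nat2Z.inj_add, Ht, (chi_per q2 chi2 Hd).
  rewrite plus_INR, Rmult_plus_distr_r, Hw, cos_periodZ, sin_periodZ. reflexivity.
Qed.

Lemma gph_shift q2 chi2 th B : dirichlet_char q2 chi2 ->
  let ph := IZR q2 * th in
  Re (gph chi2 th (Z.to_nat q2 + B)) = Re (gph chi2 th B) * cos ph - Im (gph chi2 th B) * sin ph /\
  Im (gph chi2 th (Z.to_nat q2 + B)) = Re (gph chi2 th B) * sin ph + Im (gph chi2 th B) * cos ph.
Proof.
  intros Hd ph. assert (q0 : (0 < q2)%Z) by apply Hd.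
  unfold gph. rewrite Nat2Z.inj_add, Z2Nat.id by lia.
  replace (q2 + Z.of_nat B)%Z with (Z.of_nat B + 1 * q2)%Z by lia.
  rewrite (chi_per q2 chi2 Hd).
  rewrite plus_INR, INR_IZR_INZ, Z2Nat.id by lia.
  replace ((IZR q2 + INR B) * th) with (INR B * th + ph) by (unfold ph; ring).
  rewrite cos_plus, sin_plus.
  destruct (chi2 (Z.of_nat B)) as [cr ci]. simpl. split; ring.
Qed.

Lemma gph_mean q2 chi2 th cn w : dirichlet_char q2 chi2 -> (q2 | Z.of_nat cn)%Z ->
  INR cn * th = 2 * IZR w * PI -> cos (IZR q2 * th) <> 1 ->
  psum (fun B => Re (gph chi2 th B)) cn = 0 /\ psum (fun B => Im (gph chi2 th B)) cn = 0.
Proof.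
  intros Hd Hdv Hw Hc.
  set (f1 := fun B => Re (gph chi2 th B)). set (f2 := fun B => Im (gph chi2 th B)).
  assert (P1 : forall B, f1 (B + cn)%nat = f1 B) by (intros; unfold f1; rewrite (gph_per q2 chi2 th cn w); auto).
  assert (P2 : forall B, f2 (B + cn)%nat = f2 B) by (intros; unfold f2; rewrite (gph_per q2 chi2 th cn w); auto).
  set (co := cos (IZR q2 * th)) in *. set (si := sin (IZR q2 * th)).
  set (W1 := psum f1 cn). set (W2 := psum f2 cn).
  assert (E1 : W1 = co * W1 - si * W2).
  { unfold W1 at 1. rewrite <- (window f1 cn P1 (Z.to_nat q2)).
    transitivity (psum (fun s => co * f1 s + (- si) * f2 s) cn).
    - apply psum_ext; intros s _. unfold f1, f2. rewrite (proj1 (gph_shift q2 chi2 th s Hd)). unfold co, si. ring.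
    - rewrite psum_plus, !psum_scal. unfold W1, W2. ring. }
  assert (E2 : W2 = si * W1 + co * W2).
  { unfold W2 at 1. rewrite <- (window f2 cn P2 (Z.to_nat q2)).
    transitivity (psum (fun s => si * f1 s + co * f2 s) cn).
    - apply psum_ext; intros s _. unfold f1, f2. rewrite (proj2 (gph_shift q2 chi2 th s Hd)). unfold co, si. ring.
    - rewrite psum_plus, !psum_scal. unfold W1, W2. ring. }
  assert (Hcs := sin2_cos2 (IZR q2 * th)). unfold Rsqr in Hcs. fold co si in Hcs.
  assert (Hco : co <= 1) by (unfold co; apply COS_bound).
  assert (Hlt : co < 1) by (destruct Hco; auto; contradiction).
  assert (Z1 : W1 * (2 - 2 * co) = 0).
  { assert (W1 * ((1 - co) * (1 - co) + si * si) = 0).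
    { assert (A : (1 - co) * W1 = - si * W2) by lra.
      assert (B : (1 - co) * W2 = si * W1) by lra.
      transitivity ((1 - co) * ((1 - co) * W1) + si * (si * W1)); [ring|].
      rewrite A, <- B. ring. }
    replace (2 - 2 * co) with ((1 - co) * (1 - co) + si * si) by lra. auto. }
  assert (W1z : W1 = 0).
  { destruct (Rmult_integral _ _ Z1); auto. lra. }
  assert (W2z : W2 = 0).
  { assert ((1 - co) * W2 = 0) by (rewrite W1z in E2; lra).
    destruct (Rmult_integral _ _ H); auto. lra. }
  split; auto.
Qed.

Lemma sum_n_Re (a : nat -> C) N : Re (sum_n a N) = sum_n (fun n => Re (a n)) N.
Proof. induction N. rewrite !sum_O; reflexivity. rewrite !sum_Sn. simpl. rewrite <- IHN. reflexivity. Qed.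
Lemma sum_n_Im (a : nat -> C) N : Im (sum_n a N) = sum_n (fun n => Im (a n)) N.
Proof. induction N. rewrite !sum_O; reflexivity. rewrite !sum_Sn. simpl. rewrite <- IHN. reflexivity. Qed.

Lemma is_series_C (a : nat -> C) (x y : R) :
  is_series (fun n => Re (a n)) x -> is_series (fun n => Im (a n)) y -> is_series a (x, y).
Proof.
  unfold is_series. intros Hx Hy.
  apply filterlim_locally. intros eps.
  assert (Hx' := proj1 (filterlim_locally _ _) Hx eps).
  assert (Hy' := proj1 (filterlim_locally _ _) Hy eps).
  generalize (filter_and _ _ Hx' Hy'). apply filter_imp. intros N [H1 H2].
  split. change (ball x eps (Re (sum_n a N))). rewrite sum_n_Re. exact H1.
  change (ball y eps (Im (sum_n a N))). rewrite sum_n_Im. exact H2.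
Qed.

Lemma exp_nat N y : exp (INR N * y) = exp y ^ N.
Proof.
  induction N. simpl. rewrite Rmult_0_l. apply exp_0.
  rewrite S_INR. replace ((INR N + 1) * y) with (INR N * y + y) by ring.
  rewrite exp_plus, IHN. simpl. ring.
Qed.

Lemma Cmod_pair_le x y : Cmod (x, y) <= Rabs x + Rabs y.
Proof.
  unfold Cmod. cbn [fst snd].
  rewrite <- (sqrt_pow2 (Rabs x + Rabs y)) by (pose proof (Rabs_pos x); pose proof (Rabs_pos y); lra).
  apply sqrt_le_1_alt.
  rewrite <- (pow2_abs x), <- (pow2_abs y).
  pose proof (Rabs_pos x); pose proof (Rabs_pos y). nra.
Qed.

Lemma exp_sqrt t : 0 < t -> exp (- (2 * PI * t)) <= / sqrt t.
Proof.
  intros Ht. rewrite exp_Ropp.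
  assert (Hs : 0 < sqrt t) by (apply sqrt_lt_R0; auto).
  apply Rinv_le_contravar; auto.
  assert (sqrt t <= 1 + t).
  { rewrite <- (sqrt_pow2 (1 + t)) by lra. apply sqrt_le_1_alt. nra. }
  assert (1 + 2 * PI * t <= exp (2 * PI * t)) by apply exp_ineq1_le.
  assert (PI >= 1) by (pose proof PI2_3_2; lra).
  nra.
Qed.

Definition rr (A : nat) : R := / (INR (S A) * sqrt (INR (S A))).

Lemma rr_pos A : 0 < rr A.
Proof.
  unfold rr. apply Rinv_0_lt_compat. apply Rmult_lt_0_compat. apply lt_0_INR; lia.
  apply sqrt_lt_R0, lt_0_INR; lia.
Qed.

Lemma rr_partial N : sn rr N <= 3 - 2 / sqrt (INR (S N)).
Proof.
  induction N.
  - rewrite sn_O. unfold rr. simpl. rewrite sqrt_1. lra.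
  - rewrite sn_S.
    set (s := sqrt (INR (S N))) in *. set (t := sqrt (INR (S (S N)))).
    assert (s0 : 0 < s) by (apply sqrt_lt_R0, lt_0_INR; lia).
    assert (t0 : 0 < t) by (apply sqrt_lt_R0, lt_0_INR; lia).
    assert (Es : s * s = INR (S N)) by (apply sqrt_sqrt; apply pos_INR).
    assert (Et0 : t * t = INR (S (S N))) by (apply sqrt_sqrt; apply pos_INR).
    assert (Et := Et0). rewrite S_INR in Et. rewrite <- Es in Et.
    assert (st : s < t) by nra.
    assert (rr (S N) = / (t * t * t)) by (unfold rr; fold t; rewrite <- Et0; f_equal; ring).
    rewrite H.
    assert (Key : / (t * t * t) <= 2 / s - 2 / t).
    { assert (P : 0 <= (t - s) * (t - s) * (2 * t + s)) by (apply Rmult_le_pos; nra).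
      assert (s <= 2 * (t * t) * (t - s)) by nra.
      apply (Rmult_le_reg_r (s * (t * t * t))). nra.
      replace (/ (t * t * t) * (s * (t * t * t))) with s by (field; lra).
      replace ((2 / s - 2 / t) * (s * (t * t * t))) with (2 * (t * t) * (t - s)) by (field; lra).
      auto. }
    lra.
Qed.

Lemma rr_series : ex_series rr /\ Series rr <= 3.
Proof.
  assert (Hb : forall N, sn rr N <= 3).
  { intros N. assert (H := rr_partial N).
    assert (0 < 2 / sqrt (INR (S N))).
    { apply Rdiv_lt_0_compat. lra. apply sqrt_lt_R0, lt_0_INR; lia. }
    lra. }
  assert (Hex : ex_series rr).
  { destruct (ex_finite_lim_seq_incr (sn rr) 3) as [l Hl].
    - intros; apply sum_n_incr; intros; apply Rlt_le, rr_pos.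
    - auto.
    - exists l. exact Hl. }
  split; auto.
  assert (Hs := Series_correct _ Hex).
  assert (H := is_lim_seq_le (sn rr) (fun _ => 3) (Series rr) 3).
  simpl in H. apply H; auto. apply is_lim_seq_const.
Qed.

Lemma term_decomp k n chi1 chi2 a c u A B :
  let m := (k - n - 2)%nat in
  let x := exp (- (2 * PI * INR A * u)) in
  let th := 2 * PI * INR A * (IZR a / IZR c) in
  term k n chi1 chi2 a c u A B =
  Cmult (Cdiv (chi1 (Z.of_nat A)) (RtoC (INR A ^ (n + 1))))
    (Re (gph chi2 th B) * (INR B ^ m * x ^ B), Im (gph chi2 th B) * (INR B ^ m * x ^ B)).
Proof.
  intros m x th. unfold term. f_equal. unfold Cexp, gph.
  assert (Re1 : Re (Cmult (RtoC (2 * PI * INR A * INR B)) (- u, IZR a / IZR c)) = INR B * (- (2 * PI * INR A * u)))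
    by (simpl; ring).
  assert (Im1 : Im (Cmult (RtoC (2 * PI * INR A * INR B)) (- u, IZR a / IZR c)) = INR B * th)
    by (unfold th; simpl; ring).
  rewrite Re1, Im1, exp_nat. fold x. fold m.
  destruct (chi2 (Z.of_nat B)) as [cr ci]. unfold Cmult, Cconj, RtoC; simpl. f_equal; ring.
Qed.

Lemma inner_series (al : C) f1 f2 m x : 0 <= x < 1 ->
  (forall B, Rabs (f1 B) <= 1) -> (forall B, Rabs (f2 B) <= 1) ->
  is_series (fun j => Cmult al (f1 (S j) * wt m x j, f2 (S j) * wt m x j)) (Cmult al (Sm f1 m x, Sm f2 m x)).
Proof.
  intros Hx H1 H2.
  assert (S1 : is_series (fun j => f1 (S j) * wt m x j) (Sm f1 m x)) by (apply Series_correct; apply (Sm_ex f1 1 m x Hx H1)).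
  assert (S2 : is_series (fun j => f2 (S j) * wt m x j) (Sm f2 m x)) by (apply Series_correct; apply (Sm_ex f2 1 m x Hx H2)).
  destruct al as [ar ai].
  apply is_series_C.
  - assert (E : forall j, ar * (f1 (S j) * wt m x j) - ai * (f2 (S j) * wt m x j) =
                  Re (Cmult (ar, ai) (f1 (S j) * wt m x j, f2 (S j) * wt m x j))) by (intros; simpl; ring).
    apply (is_series_ext _ _ _ E).
    replace (Re (Cmult (ar, ai) (Sm f1 m x, Sm f2 m x))) with (ar * Sm f1 m x - ai * Sm f2 m x) by (simpl; ring).
    exact (is_series_minus _ _ _ _ (is_series_scal_l ar _ _ S1) (is_series_scal_l ai _ _ S2)).
  - assert (E : forall j, ar * (f2 (S j) * wt m x j) + ai * (f1 (S j) * wt m x j) =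
                  Im (Cmult (ar, ai) (f1 (S j) * wt m x j, f2 (S j) * wt m x j))) by (intros; simpl; ring).
    apply (is_series_ext _ _ _ E).
    replace (Im (Cmult (ar, ai) (Sm f1 m x, Sm f2 m x))) with (ar * Sm f2 m x + ai * Sm f1 m x) by (simpl; ring).
    exact (is_series_plus _ _ _ _ (is_series_scal_l ar _ _ S2) (is_series_scal_l ai _ _ S1)).
Qed.

Lemma im_le_Cmod' (z : C) : Rabs (Im z) <= Cmod z.
Proof.
  destruct z as [p q]. unfold Cmod. cbn [fst snd Im].
  rewrite <- (sqrt_pow2 (Rabs q)) by apply Rabs_pos. apply sqrt_le_1_alt.
  rewrite pow2_abs. nra.
Qed.

Theorem lemma2p8 :
  forall (k n : nat), (3 <= k)%nat -> (n < k - 2)%nat ->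
  forall (c q2 : Z),
  exists K : R, 0 < K /\
  forall (q1 : Z) (chi1 chi2 : Z -> C) (a b d : Z),
    primitive_char q1 chi1 -> nontrivial_char chi1 ->
    primitive_char q2 chi2 -> nontrivial_char chi2 ->
    in_Gamma0 (q1 * q2) a b c d -> (0 < c)%Z ->
    forall u : R, 0 < u ->
    exists (inner : nat -> C) (Stot : C),
      (forall A : nat, is_series (fun m => term k n chi1 chi2 a c u (Nat.succ A) (Nat.succ m)) (inner A)) /\
      is_series inner Stot /\
      Cmod Stot <= K / sqrt u.
Proof.
  intros k n hk hn c q2.
  set (m := (k - n - 2)%nat).
  set (cn := Z.to_nat c).
  destruct (Nat.lt_ge_cases 0 cn) as [Hcn|Hcn].
  2: { exists 1. split; [lra|]. intros q1 chi1 chi2 a b d _ _ _ _ _ Hc. exfalso. unfold cn in Hcn. lia. }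
  destruct (core cn m Hcn) as [K0 [K00 HK]].
  exists (12 * K0 + 1). split; [lra|].
  intros q1 chi1 chi2 a b d [Hd1 _] Hnt1 [Hd2 _] _ HG Hc u Hu.
  assert (q20 : (0 < q2)%Z) by apply Hd2.
  assert (Hcz : Z.of_nat cn = c) by (unfold cn; lia).
  assert (Hq2c : (q2 | Z.of_nat cn)%Z).
  { rewrite Hcz. destruct HG as [_ [e He]]. exists (e * q1)%Z. lia. }
  assert (cR : IZR c <> 0) by (apply not_0_IZR; lia).
  assert (INRcn : INR cn = IZR c) by (rewrite INR_IZR_INZ, Hcz; auto).
  set (xA := fun A : nat => exp (- (2 * PI * INR A * u))).
  set (thA := fun A : nat => 2 * PI * INR A * (IZR a / IZR c)).
  set (f1 := fun A B => Re (gph chi2 (thA A) B)).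
  set (f2 := fun A B => Im (gph chi2 (thA A) B)).
  set (al := fun A : nat => Cdiv (chi1 (Z.of_nat A)) (RtoC (INR A ^ (n + 1)))).
  set (inner := fun A => Cmult (al (S A)) (Sm (f1 (S A)) m (xA (S A)), Sm (f2 (S A)) m (xA (S A)))).
  assert (Hx : forall A, 0 <= xA (S A) < 1).
  { intros A. unfold xA. split. apply Rlt_le, exp_pos. rewrite <- exp_0. apply exp_increasing.
    assert (0 < INR (S A)) by (apply lt_0_INR; lia). pose proof PI_RGT_0.
    assert (P1 : 0 < 2 * PI) by lra.
    assert (P2 : 0 < 2 * PI * INR (S A)) by (apply Rmult_lt_0_compat; lra).
    assert (P3 : 0 < 2 * PI * INR (S A) * u) by (apply Rmult_lt_0_compat; lra). lra. }
  assert (Hf1b : forall A B, Rabs (f1 A B) <= 1) by (intros; apply (gph_bound q2 chi2 _ B Hd2)).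
  assert (Hf2b : forall A B, Rabs (f2 A B) <= 1) by (intros; apply (gph_bound q2 chi2 _ B Hd2)).
  assert (Hin : forall A, is_series (fun j => term k n chi1 chi2 a c u (S A) (S j)) (inner A)).
  { intros A.
    assert (E : forall j, Cmult (al (S A)) (f1 (S A) (S j) * wt m (xA (S A)) j, f2 (S A) (S j) * wt m (xA (S A)) j)
                = term k n chi1 chi2 a c u (S A) (S j)).
    { intros j. rewrite term_decomp. reflexivity. }
    apply (is_series_ext _ _ _ E). apply inner_series; auto. }
  assert (su : 0 < sqrt u) by (apply sqrt_lt_R0; auto).
  set (bnd := fun A => 2 * K0 / sqrt u * rr A).
  assert (bnd0 : forall A, 0 <= bnd A).
  { intros A. unfold bnd. apply Rmult_le_pos. apply Rmult_le_pos. lra. apply Rlt_le, Rinv_0_lt_compat; auto.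
    apply Rlt_le, rr_pos. }
  assert (Hbnd : forall A, Cmod (inner A) <= bnd A).
  { intros A. unfold inner.
    set (A' := S A).
    assert (A'pos : 0 < INR A') by (apply lt_0_INR; unfold A'; lia).
    assert (A'1 : 1 <= INR A') by (unfold A'; rewrite S_INR; pose proof (pos_INR A); lra).
    assert (Hpow : INR A' <= INR A' ^ (n + 1)).
    { rewrite Nat.add_1_r, <- tech_pow_Rmult. assert (1 <= INR A' ^ n) by (apply pow_R1_Rle; lra). nra. }
    assert (Hpos : 0 < INR A' ^ (n + 1)) by lra.
    rewrite Cmod_mult. unfold al.
    rewrite Cmod_div. 2: { apply Cmod_gt_0. rewrite Cmod_R, Rabs_right; lra. }
    rewrite Cmod_R, (Rabs_right (INR A' ^ (n + 1))) by lra.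
    destruct (Req_dec (Cmod (chi1 (Z.of_nat A'))) 0) as [Hz|Hnz].
    { rewrite Hz. unfold Rdiv. rewrite !Rmult_0_l. apply bnd0. }
    assert (Hchi : chi1 (Z.of_nat A') <> RtoC 0).
    { intro H. apply Hnz. rewrite H. apply Cmod_0. }
    assert (Hcos := phase_ne1 q1 chi1 q2 a b c d A' Hd1 Hnt1 q20 HG Hc Hchi).
    set (w := (Z.of_nat A' * a)%Z).
    assert (Hw : INR cn * thA A' = 2 * IZR w * PI).
    { rewrite INRcn. unfold thA, w. rewrite mult_IZR, <- INR_IZR_INZ. field. auto. }
    destruct (gph_mean q2 chi2 (thA A') cn w Hd2 Hq2c Hw Hcos) as [M1 M2].
    assert (G1 : good cn (f1 A') 1).
    { split; [|split].
      - intros B. unfold f1. rewrite (gph_per q2 chi2 (thA A') cn w Hd2 Hq2c Hw). reflexivity.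
      - exact M1.
      - apply Hf1b. }
    assert (G2 : good cn (f2 A') 1).
    { split; [|split].
      - intros B. unfold f2. rewrite (gph_per q2 chi2 (thA A') cn w Hd2 Hq2c Hw). reflexivity.
      - exact M2.
      - apply Hf2b. }
    assert (B1 := HK m (le_n m) (f1 A') 1 (xA A') (Hx A) G1).
    assert (B2 := HK m (le_n m) (f2 A') 1 (xA A') (Hx A) G2).
    assert (Cp := Cmod_pair_le (Sm (f1 A') m (xA A')) (Sm (f2 A') m (xA A'))).
    assert (Hch := chi_bound q1 chi1 Hd1 (Z.of_nat A')).
    assert (Hxb : xA A' <= / (sqrt (INR A') * sqrt u)).
    { unfold xA. rewrite <- sqrt_mult_alt by lra.
      replace (2 * PI * INR A' * u) with (2 * PI * (INR A' * u)) by ring.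
      apply exp_sqrt. apply Rmult_lt_0_compat; lra. }
    assert (sA : 0 < sqrt (INR A')) by (apply sqrt_lt_R0; lra).
    set (X := xA A') in *.
    set (s1 := Sm (f1 A') m X) in *. set (s2 := Sm (f2 A') m X) in *.
    set (ch := Cmod (chi1 (Z.of_nat A'))) in *.
    assert (X0 : 0 <= X) by (destruct (Hx A); auto).
    assert (T1 : ch / INR A' ^ (n + 1) <= / INR A').
    { apply (Rmult_le_reg_r (INR A' ^ (n + 1) * INR A')). nra.
      replace (ch / INR A' ^ (n + 1) * (INR A' ^ (n + 1) * INR A')) with (ch * INR A') by (field; lra).
      replace (/ INR A' * (INR A' ^ (n + 1) * INR A')) with (INR A' ^ (n + 1)) by (field; lra).
      assert (0 <= ch) by apply Cmod_ge_0. nra. }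
    assert (T2 : Cmod (s1, s2) <= 2 * K0 * X) by lra.
    assert (0 <= ch / INR A' ^ (n + 1)) by (apply Rdiv_le_0_compat; [apply Cmod_ge_0|lra]).
    assert (0 <= Cmod (s1, s2)) by apply Cmod_ge_0.
    apply Rle_trans with (/ INR A' * (2 * K0 * X)).
    { apply Rmult_le_compat; auto. }
    apply Rle_trans with (/ INR A' * (2 * K0 * / (sqrt (INR A') * sqrt u))).
    { apply Rmult_le_compat_l. apply Rlt_le, Rinv_0_lt_compat; auto.
      apply Rmult_le_compat_l; lra. }
    right. unfold bnd, rr. fold A'. field. repeat split; lra. }
  destruct rr_series as [rrex rrS].
  assert (bex : ex_series bnd).
  { destruct rrex as [l Hl]. exists (2 * K0 / sqrt u * l). exact (is_series_scal_l _ _ _ Hl). }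
  assert (SB : Series bnd <= 2 * K0 / sqrt u * 3).
  { unfold bnd. rewrite Series_scal_l. apply Rmult_le_compat_l; auto.
    apply Rmult_le_pos. lra. apply Rlt_le, Rinv_0_lt_compat; auto. }
  assert (HRe : forall A, Rabs (Re (inner A)) <= bnd A).
  { intros A. eapply Rle_trans. apply re_le_Cmod. apply Hbnd. }
  assert (HIm : forall A, Rabs (Im (inner A)) <= bnd A).
  { intros A. eapply Rle_trans. apply im_le_Cmod'. apply Hbnd. }
  assert (exRe : ex_series (fun A => Rabs (Re (inner A)))).
  { apply (@ex_series_le R_AbsRing R_CompleteNormedModule _ bnd); auto.
    intros A. change (norm (Rabs (Re (inner A)))) with (Rabs (Rabs (Re (inner A)))).
    rewrite Rabs_Rabsolu. auto. }
  assert (exIm : ex_series (fun A => Rabs (Im (inner A)))).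
  { apply (@ex_series_le R_AbsRing R_CompleteNormedModule _ bnd); auto.
    intros A. change (norm (Rabs (Im (inner A)))) with (Rabs (Rabs (Im (inner A)))).
    rewrite Rabs_Rabsolu. auto. }
  assert (SRe : Rabs (Series (fun A => Re (inner A))) <= Series bnd).
  { eapply Rle_trans. apply Series_Rabs; auto. apply Series_le; auto.
    intros A; split; [apply Rabs_pos|auto]. }
  assert (SIm : Rabs (Series (fun A => Im (inner A))) <= Series bnd).
  { eapply Rle_trans. apply Series_Rabs; auto. apply Series_le; auto.
    intros A; split; [apply Rabs_pos|auto]. }
  exists inner, (Series (fun A => Re (inner A)), Series (fun A => Im (inner A))).
  split; [exact Hin|split].
  - apply is_series_C; apply Series_correct; apply ex_series_Rabs; auto.
  - eapply Rle_trans. apply Cmod_pair_le.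
    assert (E : (12 * K0 + 1) / sqrt u = 6 * (2 * K0 / sqrt u) + / sqrt u) by (field; lra).
    rewrite E. assert (0 < / sqrt u) by (apply Rinv_0_lt_compat; auto). lra.
Qed.
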